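(* Let $p$ be a prime, let $r$ be a prime different from $p$, and let $a,c,t$ be positive integers with $t\ge 2$ such that $c$ is a primitive divisor of $p^a-1$ and $\gcd\big(\tfrac{p^a-1}{c},r\big)=1$. Suppose that either (i) $r=2$ and $p^a\equiv 1\pmod 4$, or (ii) $r$ is odd and the multiplicative order of $p^a$ modulo $r^t$ equals $r^h$ for some $0\le h\le t-1$. Then $$g\Big(\tfrac{p^{ar^t}-1}{c\,r^t},\,p^{ar^t}\Big)=r^t\,g\Big(\tfrac{p^a-1}{c},\,p^a\Big).$$
   Context: For a prime power $q$ and a positive integer $k$, the Waring number $g(k,q)$ is the smallest $s$ (if it exists) such that every element of $\mathbb{F}_q$ is a sum of $s$ $k$-th powers of elements of $\mathbb{F}_q$. An integer $e$ is a primitive divisor of $p^a-1$ if $e\mid p^a-1$ and $e\nmid p^s-1$ for every $1\le s<a$. *)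

(* Defs.v *)
From HB Require Import structures.
From mathcomp Require Import all_boot all_order all_algebra all_field.
Set Implicit Arguments. Unset Strict Implicit. Unset Printing Implicit Defensive.
Import GRing.Theory.

Definition waring_sums (F : finFieldType) (k s : nat) : Prop :=
  forall x : F, exists f : 'I_s -> F, x = (\sum_(i < s) (f i) ^+ k)%R.

Definition is_waring_number (F : finFieldType) (k s : nat) : Prop :=
  waring_sums F k s /\ forall s', waring_sums F k s' -> s <= s'.

Definition primitive_divisor (p a e : nat) : Prop :=
  e %| p ^ a - 1 /\ forall s, 1 <= s < a -> ~~ (e %| p ^ s - 1).

Definition mult_order_mod (m x n : nat) : Prop :=
  0 < n /\ x ^ n = 1 %[mod m] /\ forall j, 0 < j < n -> x ^ j <> 1 %[mod m].

(* Main.v *)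
Require Import Defs.
From Stdlib Require Import Classical_Prop Classical_Pred_Type.
From HB Require Import structures.
From mathcomp Require Import all_boot all_order all_algebra all_field all_solvable.
Set Implicit Arguments. Unset Strict Implicit. Unset Printing Implicit Defensive.
Import GRing.Theory.
Local Open Scope ring_scope.

Section FpEmb.
Variables (p : nat) (F : nzRingType).
Hypothesis chF : p \in [pchar F].

Definition fpiD of p \in [pchar F] := fun (x : 'F_p) => ((x : nat)%:R : F).
Local Notation fpi := (fpiD chF).

Let prp : prime p. Proof. exact: pcharf_prime chF. Qed.

Lemma Fp_natE (x : 'F_p) : x = (x : nat)%:R.
Proof.
apply: val_inj; rewrite /= val_Fp_nat // modn_small //.
by have := ltn_ord x; rewrite [X in (_ < X)%N -> _]Fp_cast.
Qed.

Lemma fpi_nat n : fpi (n%:R) = n%:R.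
Proof.
rewrite /fpi val_Fp_nat //.
by rewrite [in RHS](divn_eq n p) natrD mulrnA (mulrn_pchar chF) add0r.
Qed.

Lemma fpi_nmod : nmod_morphism fpi.
Proof.
split; first by rewrite /fpi.
move=> x y; rewrite [x]Fp_natE [y]Fp_natE -natrD !fpi_nat natrD.
by [].
Qed.

Lemma fpi_mon : monoid_morphism fpi.
Proof.
split.
  exact: (fpi_nat 1).
move=> x y; rewrite [x]Fp_natE [y]Fp_natE -natrM !fpi_nat natrM.
by [].
Qed.

HB.instance Definition _ := GRing.isNmodMorphism.Build _ _ fpi fpi_nmod.
HB.instance Definition _ := GRing.isMonoidMorphism.Build _ _ fpi fpi_mon.

End FpEmb.


Section Frob.
Variables (p : nat) (F : fieldType).
Hypothesis chF : p \in [pchar F].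

Lemma frobD k (x y : F) : (x + y) ^+ (p ^ k) = x ^+ (p ^ k) + y ^+ (p ^ k).
Proof.
elim: k => [|k IH]; first by rewrite !expr1.
by rewrite expnSr !exprM IH -!(pFrobenius_autE chF) pFrobenius_autD_comm //; apply: mulrC.
Qed.

Lemma frobN k (x : F) : (- x) ^+ (p ^ k) = - x ^+ (p ^ k).
Proof.
elim: k => [|k IH]; first by rewrite !expr1.
by rewrite expnSr !exprM IH -!(pFrobenius_autE chF) pFrobenius_autN.
Qed.

Lemma frobB k (x y : F) : (x - y) ^+ (p ^ k) = x ^+ (p ^ k) - y ^+ (p ^ k).
Proof. by rewrite frobD frobN. Qed.

Lemma frob_sum k n (f : 'I_n -> F) : (\sum_(i < n) f i) ^+ (p ^ k) = \sum_(i < n) f i ^+ (p ^ k).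
Proof.
have pk : (0 < p ^ k)%N by rewrite expn_gt0 prime_gt0 // (pcharf_prime chF).
elim/big_rec2: _ => [|i y1 y2 _ <-]; first by rewrite -(prednK pk) exprS mul0r.

by rewrite frobD.
Qed.

Lemma frob0 k : (0 : F) ^+ (p ^ k) = 0.
Proof.
have pk : (0 < p ^ k)%N by rewrite expn_gt0 prime_gt0 // (pcharf_prime chF).
by rewrite -(prednK pk) exprS mul0r.
Qed.

Lemma frob_inj k (x y : F) : x ^+ (p ^ k) = y ^+ (p ^ k) -> x = y.
Proof.
move/eqP; rewrite -subr_eq0 -frobB expf_eq0 subr_eq0 => /andP[_ /eqP].
done.
Qed.
End Frob.

Section Basis.
Variables (p : nat) (F : fieldType).
Hypothesis chF : p \in [pchar F].

Lemma frob_fix_iter b j (x : F) : x ^+ (p ^ b) = x -> x ^+ (p ^ (b * j)) = x.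
Proof.
move=> hx; elim: j => [|j IH]; first by rewrite muln0 expr1.
by rewrite mulnS expnD exprM hx IH.
Qed.

Lemma basis_zero b n (th : F) (c : nat -> F) :
  (forall i, c i ^+ (p ^ b) = c i) ->
  (forall e, (0 < e < n)%N -> th ^+ (p ^ (b * e)) != th) ->
  \sum_(i < n) c i * th ^+ i = 0 -> forall i, (i < n)%N -> c i = 0.
Proof.
move=> hc hth hs.
pose P := \poly_(i < n) c i.
have rootP j : root P (th ^+ (p ^ (b * j))).
  apply/eqP; rewrite horner_poly.
  transitivity ((\sum_(i < n) c i * th ^+ i) ^+ (p ^ (b * j))); last first.
    by rewrite hs (frob0 chF).
  rewrite (frob_sum chF); apply: eq_bigr => i _.
  by rewrite exprMn (frob_fix_iter _ (hc i)) -!exprM mulnC.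
pose rs := [seq th ^+ (p ^ (b * j)) | j <- iota 0 n].
have Urs : uniq rs.
  rewrite map_inj_in_uniq ?iota_uniq // => j l; rewrite !mem_iota !add0n => /andP[_ jn] /andP[_ ln] E.
  wlog jl : j l jn ln E / (j <= l)%N.
    by move=> W; case: (leqP j l) => h; [apply: W | apply/esym/W => //; apply: ltnW].
  apply/eqP; rewrite eqn_leq jl leqNgt; apply/negP => lt_jl.
  have H : (0 < l - j < n)%N by rewrite subn_gt0 lt_jl /= (leq_ltn_trans (leq_subr _ _) ln).
  suff E2 : th ^+ (p ^ (b * (l - j))) = th by move: (hth _ H); rewrite E2 eqxx.
  apply: (frob_inj chF (k := b * j)).
  rewrite -exprM -expnD -mulnDr subnK ?(ltnW lt_jl) //.
have sz : size rs = n by rewrite size_map size_iota.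
have P0 : P = 0.
  apply/eqP/negP => /negP nzP.
  have allr : all (root P) rs by apply/allP => y /mapP[j _ ->].
  by have := max_poly_roots nzP allr Urs; rewrite sz ltnNge size_poly.
move=> i lin; have := congr1 (fun q : {poly F} => q`_i) P0.
by rewrite coef_poly lin coef0.
Qed.

Lemma basis_zero_ord b n (th : F) (c : 'I_n -> F) :
  (forall i, c i ^+ (p ^ b) = c i) ->
  (forall e, (0 < e < n)%N -> th ^+ (p ^ (b * e)) != th) ->
  \sum_(i < n) c i * th ^+ i = 0 -> forall i, c i = 0.
Proof.
case: n c => [|n] c hc hth hs i; first by case: i.
have := @basis_zero b n.+1 th (fun j => c (inord j)) _ hth _ i (ltn_ord i).
rewrite inord_val; apply => [j|]; first exact: hc.
by rewrite -[RHS]hs; apply: eq_bigr => j _; rewrite inord_val.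
Qed.
End Basis.

Section BasisOnto.
Variables (p : nat) (F : finFieldType) (D : finType).
Hypothesis chF : p \in [pchar F].
Variables (iota : D -> F) (b n : nat) (th : F).
Hypotheses (iota_inj : injective iota) (iota_fix : forall d, iota d ^+ (p ^ b) = iota d)
  (hth : forall e, (0 < e < n)%N -> th ^+ (p ^ (b * e)) != th)
  (hcard : (#|D| ^ n = #|F|)%N).

Definition brepr (f : {ffun 'I_n -> D}) : F := \sum_(i < n) iota (f i) * th ^+ i.

Lemma brepr_inj : injective brepr.
Proof.
move=> f g /eqP; rewrite -subr_eq0 /brepr -sumrB => /eqP hs.
apply/ffunP => i; apply: iota_inj; apply/eqP; rewrite -subr_eq0; apply/eqP.
apply: (basis_zero_ord chF (b := b) (th := th) (c := fun i => iota (f i) - iota (g i))) => //.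
  by move=> j; rewrite (frobB chF) !iota_fix.
by rewrite -[RHS]hs; apply: eq_bigr => j _; rewrite mulrBl.
Qed.

Lemma brepr_onto (x : F) : exists f, x = brepr f.
Proof.
have := @inj_card_onto _ _ _ brepr_inj; rewrite card_ffun card_ord hcard leqnn => /(_ isT x).
by move=> /codomP[f ->]; exists f.
Qed.
End BasisOnto.


Lemma min_exists (T : Type) (Q : T -> Prop) (f : T -> nat) :
  (exists x, Q x) -> exists x, Q x /\ forall y, Q y -> (f x <= f y)%N.
Proof.
move=> [x Qx].
have H : forall n x, (f x <= n)%N -> Q x -> exists z, Q z /\ forall y, Q y -> (f z <= f y)%N.
  elim => [|n IH] x0 hx Qx0.
    exists x0; split=> // y _; by move: hx; rewrite leqn0 => /eqP->.
  case: (Classical_Prop.classic (exists y, Q y /\ (f y < f x0)%N)) => [[y [Qy lt]] | nex].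
    by apply: (IH y) => //; rewrite -ltnS (leq_trans lt hx).
  exists x0; split => // y Qy; rewrite leqNgt; apply/negP => lt; apply: nex; exists y; split; [exact: Qy | exact: lt].
exact: (H (f x) x).
Qed.

Lemma ff_nz_pow (F : finFieldType) (x : F) : x != 0 -> x ^+ #|F|.-1 = 1.
Proof.
move=> nz; apply: (mulIf nz); rewrite mul1r -exprSr prednK ?expf_card //.
by apply: leq_trans (finNzRing_gt1 F).
Qed.

Lemma ff_prim (F : finFieldType) : exists2 w : F, (#|F|.-1).-primitive_root w &
  forall x : F, x != 0 -> exists2 j, (j < #|F|.-1)%N & x = w ^+ j.
Proof.
pose rs := enum [pred x : F | x != 0].
have : has (#|F|.-1).-primitive_root rs.
  apply: has_prim_root.
  - by rewrite -ltnS prednK ?finNzRing_gt1 // (leq_trans _ (finNzRing_gt1 F)).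
  - by apply/allP => x; rewrite mem_enum inE => nz; apply/unity_rootP; apply: ff_nz_pow.
  - exact: enum_uniq.
  - by rewrite -cardE cardC1.
case/hasP => w _ pw; exists w => // x nz.
have [j ->] := prim_rootP pw (ff_nz_pow nz); by exists j.
Qed.

Section Ev.
Variables (p : nat) (F : fieldType) (f : {rmorphism 'F_p -> F}) (th : F).
Definition ev (P : {poly 'F_p}) := (map_poly f P).[th].
Lemma evD P R : ev (P + R) = ev P + ev R. Proof. by rewrite /ev rmorphD hornerD. Qed.
Lemma evB P R : ev (P - R) = ev P - ev R. Proof. by rewrite /ev rmorphB hornerD hornerN. Qed.
Lemma evM P R : ev (P * R) = ev P * ev R. Proof. by rewrite /ev rmorphM hornerM. Qed.
Lemma evXn j : ev 'X^j = th ^+ j. Proof. by rewrite /ev map_polyXn hornerXn. Qed.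
Lemma evC c : ev c%:P = f c. Proof. by rewrite /ev map_polyC hornerC. Qed.
Lemma ev0 : ev 0 = 0. Proof. by rewrite /ev rmorph0 horner0. Qed.
Lemma evOne : ev 1 = 1. Proof. by rewrite /ev rmorph1 hornerC. Qed.
End Ev.

Section Embed.
Variables (p : nat) (F2 F1 : finFieldType).
Hypotheses (ch2 : p \in [pchar F2]) (ch1 : p \in [pchar F1])
  (hfix : forall x : F2, x ^+ #|F1| = x).

Lemma embed_exists : inhabited {rmorphism F2 -> F1}.
Proof.
have [al alP alE] := ff_prim F2.
pose i2 : {rmorphism 'F_p -> F2} := fpiD ch2.
pose i1 : {rmorphism 'F_p -> F1} := fpiD ch1.
have q1 : (1 < #|F2|)%N := finNzRing_gt1 F2.
have wit : exists P : {poly 'F_p}, P != 0 /\ (ev i2 al) P = 0.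
  exists ('X^(#|F2|.-1) - 1); split.
  - apply/eqP => /(congr1 (fun P : {poly 'F_p} => size P)).
    by rewrite size_Xn_sub_1 ?size_poly0 // -ltnS prednK // ltnW.
  - by rewrite evB evXn evOne (prim_expr_order alP) subrr.
have [m [[m0 em] mmin]] := @min_exists _ (fun P : {poly 'F_p} => P != 0 /\ (ev i2 al) P = 0) (fun P => size P) wit.
have kerm : forall P, (ev i2 al) P = 0 -> P %% m = 0.
  move=> P hP; apply/eqP/negP => /negP nz.
  have e : (ev i2 al) (P %% m) = 0.
    by move: hP; rewrite {1}(divp_eq P m) evD evM em mulr0 add0r.
  by have := mmin _ (conj nz e); rewrite leqNgt ltn_modp m0.
have sm : (1 < size m)%N.
  rewrite ltnNge; apply/negP => /size1_polyC h.
  move: em; rewrite h evC => /eqP; rewrite fmorph_eq0 => /eqP c0.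
  by move: m0; rewrite h c0 eqxx.
have [th1 rt1] : exists th1 : F1, root (map_poly i1 m) th1.
  have dv : m %| 'X^#|F1| - 'X.
    apply/modp_eq0P; apply: kerm.
    by rewrite evB evXn /(ev i2 al) /ev map_polyX hornerX hfix subrr.
  rewrite -(dvdp_map i1) rmorphB /= map_polyXn map_polyX finField_genPoly in dv.
  have [ms E] := dvdp_prod_XsubC dv.
  move: E; case: (mask ms _) => [|y s] E.
    by move: (eqp_size E); rewrite big_nil size_poly1 size_map_poly => sz; move: sm; rewrite sz.
  by exists y; rewrite (eqp_root E) big_cons rootM root_XsubC eqxx.
have ker12 : forall P, (ev i2 al) P = 0 -> (ev i1 th1) P = 0.
  move=> P hP; rewrite (divp_eq P m) (kerm _ hP) addr0 evM.
  have rt1' : ev i1 th1 m = 0 := rootP rt1.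
  by rewrite rt1' mulr0.
pose phi (x : F2) := if [pick j : 'I_#|F2| | al ^+ j == x] is Some j then th1 ^+ (j : nat) else 0.
have phiE : forall P, phi ((ev i2 al) P) = (ev i1 th1) P.
  move=> P; rewrite /phi; case: pickP => [j /eqP hj | hn].
    apply/eqP; rewrite eq_sym -subr_eq0 -(evXn i1 th1) -evB; apply/eqP; apply: ker12.
    by rewrite evB evXn hj subrr.
  suff h : (ev i2 al) P = 0 by rewrite (ker12 _ h).
  apply/eqP/negP => /negP nz; have [j jlt hj] := alE _ nz.
  have jq : (j < #|F2|)%N by rewrite (leq_trans jlt) // leq_pred.
  by have := hn (Ordinal jq); rewrite /= -hj eqxx.
have onto : forall x, exists P, x = (ev i2 al) P.
  move=> x; have [->|nz] := eqVneq x 0; first by exists 0; rewrite ev0.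
  by have [j _ ->] := alE _ nz; exists 'X^j; rewrite evXn.
have phiB : forall x y, phi (x - y) = phi x - phi y.
  move=> x y; have [P ->] := onto x; have [R ->] := onto y; by rewrite -evB !phiE evB.
have phi1 : phi 1 = 1 by rewrite -(evOne i2 al) phiE evOne.
have phiM : forall x y, phi (x * y) = phi x * phi y.
  move=> x y; have [P ->] := onto x; have [R ->] := onto y; by rewrite -evM !phiE evM.
have phiD : forall x y, phi (x + y) = phi x + phi y.
  move=> x y; have [P ->] := onto x; have [R ->] := onto y; by rewrite -evD !phiE evD.
have phi0 : phi 0 = 0 by rewrite -(ev0 i2 al) phiE ev0.
have nm : nmod_morphism phi := (phi0, phiD).
have mm : monoid_morphism phi := (phi1, phiM).
pose phiN := GRing.isNmodMorphism.Build _ _ phi nm.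
pose phiMo := GRing.isMonoidMorphism.Build _ _ phi mm.
pose phiR : {rmorphism F2 -> F1} := HB.pack phi phiN phiMo.
exact: (inhabits phiR).
Qed.
End Embed.


Section Sums.
Variable F : fieldType.
Definition SumA (A : pred F) (s : nat) (x : F) : Prop :=
  exists l : seq F, [/\ (size l <= s)%N, all A l & x = \sum_(y <- l) y].

Lemma SumA_mono A s s' x : (s <= s')%N -> SumA A s x -> SumA A s' x.
Proof. by move=> h [l [hl al ->]]; exists l; split => //; apply: leq_trans h. Qed.

Lemma SumA0 A s : SumA A s 0.
Proof. by exists [::]; rewrite big_nil. Qed.

Lemma SumA_add A s s' x y : SumA A s x -> SumA A s' y -> SumA A (s + s') (x + y).
Proof.
move=> [l [hl al ->]] [l' [hl' al' ->]]; exists (l ++ l'); split.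
- by rewrite size_cat leq_add.
- by rewrite all_cat al al'.
- by rewrite big_cat.
Qed.

Lemma SumA_sum A s n (t : 'I_n -> F) : (forall i, SumA A s (t i)) -> SumA A (n * s) (\sum_(i < n) t i).
Proof.
elim: n t => [|n IH] t ht; first by rewrite big_ord0; apply: SumA0.
rewrite big_ord_recr mulSn addnC; apply: SumA_add; last exact: ht.
by apply: IH.
Qed.


End Sums.

Lemma SumA_map (F F' : fieldType) (B : pred F') (A : pred F) s (g : F -> F') x :
  (forall y, y \in A -> g y \in B) -> (forall y z, g (y + z) = g y + g z) -> g 0 = 0 ->
  SumA A s x -> SumA B s (g x).
Proof.
move=> hAB gD g0 [l [hl al ->]]; exists (map g l); split.
- by rewrite size_map.
- by apply/allP => y /mapP[z zl ->]; apply: hAB; apply: (allP al).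
- by rewrite big_map; apply: (big_morph g gD g0).
Qed.


Section KP.
Variable F : finFieldType.
Definition kp (k : nat) : pred F := [pred y | [exists z, y == z ^+ k]].

Lemma kpP k y : reflect (exists z, y = z ^+ k) (y \in kp k).
Proof. by apply: (iffP existsP) => [[z /eqP]|[z ->]]; exists z. Qed.

Lemma sum_nth_pad (g : F -> F) (l : seq F) s : g 0 = 0 -> (size l <= s)%N ->
  \sum_(i < s) g (nth 0 l i) = \sum_(y <- l) g y.
Proof.
move=> g0 hs; rewrite (big_nth 0) -(big_mkord xpredT (fun i => g (nth 0 l i))).
rewrite (big_cat_nat (leq0n _) hs) /= [X in _ + X]big1_seq ?addr0 //.
by move=> i /andP[_]; rewrite mem_index_iota => /andP[hi _]; rewrite nth_default.
Qed.

Lemma waringE k s : (0 < k)%N -> waring_sums F k s <-> forall x, SumA (kp k) s x.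
Proof.
move=> k0; split => [hw x | hs x].
  have [f ->] := hw x; exists [seq f i ^+ k | i <- enum 'I_s]; split.
  - by rewrite size_map size_enum_ord.
  - by apply/allP => y /mapP[i _ ->]; apply/kpP; exists (f i).
  - by rewrite big_map big_enum.
have [l [hl al ->]] := hs x.
have [l' El] : exists l' : seq F, l = map (fun z => z ^+ k) l'.
  elim: l al {hl} => [|y l IH]; first by exists [::].
  rewrite /= => /andP[/kpP[z ->] /IH[l' ->]]; by exists (z :: l').
exists (fun i => nth 0 l' i).
rewrite El big_map -(@sum_nth_pad (fun z => z ^+ k) l' s) //.
- by rewrite -(prednK k0) exprS mul0r.
- by rewrite -(size_map (fun z => z ^+ k)) -El.
Qed.
End KP.

Section Main.
Variables (F2 F1 : finFieldType) (phi : {rmorphism F2 -> F1}) (n k1 k2 : nat) (be : F1).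
Hypotheses
 (hbasis : forall x : F1, exists f : 'I_n -> F2, x = \sum_(i < n) phi (f i) * be ^+ i)
 (huniq : forall f g : 'I_n -> F2, \sum_(i < n) phi (f i) * be ^+ i = \sum_(i < n) phi (g i) * be ^+ i -> forall i, f i = g i)
 (hdec : forall z, z \in @kp F1 k1 -> exists (i : 'I_n) (w : F2), w \in @kp F2 k2 /\ z = phi w * be ^+ i)
 (hcomp : forall (i : 'I_n) w, w \in @kp F2 k2 -> phi w * be ^+ i \in @kp F1 k1).

Lemma upper s : (forall y, SumA (@kp F2 k2) s y) -> forall x, SumA (@kp F1 k1) (n * s) x.
Proof.
move=> hs x; have [f ->] := hbasis x; apply: SumA_sum => i.
have h1 : forall y, y \in @kp F2 k2 -> (fun y => phi y * be ^+ i) y \in @kp F1 k1.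
  by move=> y hy; apply: hcomp.
have h2 : forall y z : F2, phi (y + z) * be ^+ i = phi y * be ^+ i + phi z * be ^+ i.
  by move=> y z; rewrite rmorphD mulrDl.
have h3 : phi 0 * be ^+ i = 0 by rewrite rmorph0 mul0r.
exact: (SumA_map h1 h2 h3 (hs (f i))).
Qed.

Lemma group l : all (@kp F1 k1) l -> exists G : 'I_n -> seq F2,
  [/\ forall i, all (@kp F2 k2) (G i), (\sum_(i < n) size (G i) = size l)%N &
      \sum_(y <- l) y = \sum_(i < n) phi (\sum_(w <- G i) w) * be ^+ i].
Proof.
elim: l => [|z l IH] /=.
  exists (fun _ => [::]); split => //; first by rewrite big1.
  by rewrite big_nil big1 // => i _; rewrite big_nil rmorph0 mul0r.
move/andP=> [hz /IH [G [hG hsz hsum]]]; have [j [w [hw ->]]] := hdec hz.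
exists (fun i => if i == j then w :: G i else G i); split.
- move=> i; case: eqP => _ /=; last exact: hG.
  by apply/andP; split; [exact: hw | exact: hG].
- rewrite (bigD1 j) //= eqxx /= (eq_bigr (fun i => size (G i))); last by move=> i /negPf ->.
  by rewrite -hsz [in RHS](bigD1 j) //= addSn.
- rewrite big_cons hsum [in RHS](bigD1 j) //= eqxx big_cons rmorphD mulrDl.
  rewrite [in LHS](bigD1 j) //= -!addrA; congr (_ + (_ + _)).
  by apply: eq_bigr => i /negPf ->.
Qed.

Lemma lower S s2 y0 : ~ SumA (@kp F2 k2) s2 y0 -> (forall x, SumA (@kp F1 k1) S x) -> (n * s2.+1 <= S)%N.
Proof.
move=> ny hS; have [l [hl al E]] := hS (\sum_(i < n) phi y0 * be ^+ i).
have [G [hG hsz hsum]] := group al.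
have eq i : y0 = \sum_(w <- G i) w.
  by apply: (huniq (f := fun _ => y0) (g := fun i => \sum_(w <- G i) w)); rewrite -hsum -E.
have big i : (s2 < size (G i))%N.
  rewrite ltnNge; apply/negP => h; apply: ny; exists (G i); split => //; exact: eq i.
apply: leq_trans hl; rewrite -hsz -[X in (X * _)%N]card_ord -sum_nat_const.
by apply: leq_sum => i _; exact: big i.
Qed.
End Main.

Local Close Scope ring_scope.

From mathcomp Require Import zify ring.
Set Implicit Arguments. Unset Strict Implicit. Unset Printing Implicit Defensive.

Lemma expand1 m i : exists U, (1 + m) ^ i = 1 + i * m + 'C(i, 2) * m ^ 2 + m ^ 3 * U.
Proof.
elim: i => [|i [U IH]]; first by exists 0; rewrite bin0n /= muln0 !addn0.
exists ('C(i, 2) + U + U * m).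
rewrite expnS IH binS bin1.
ring.
Qed.

Lemma L1 r m : prime r -> ((r == 2) && (4 %| m)) || (odd r && (r %| m)) ->
  exists z, (1 + m) ^ r - 1 = m * r * (1 + r * z).
Proof.
move=> pr /orP[/andP[/eqP -> /dvdnP[m2 ->]] | /andP[odr /dvdnP[m1 ->]]].
  exists m2; rewrite expnS expn1.
  apply/eqP; rewrite -(eqn_add2r 1) subnK; last by rewrite muln_gt0.
  apply/eqP; ring.
have [U E] := expand1 (m1 * r) r.
have rh : r = (r./2).*2.+1 by rewrite -[LHS]odd_double_half odr.
have C2 : 'C(r, 2) = r * r./2.
  have r1 : r.-1 = (r./2).*2 by rewrite {1}rh.
  by rewrite bin2 r1 -doubleMr doubleK.
exists (r./2 * m1 + m1 ^ 2 * U).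
rewrite E C2 -!addnA addKn.
ring.
Qed.

Definition rcond r m := ((r == 2) && (4 %| m)) || (odd r && (r %| m)).

Lemma rcond_dvd r m m' : rcond r m -> m %| m' -> rcond r m'.
Proof.
rewrite /rcond => /orP[/andP[r2 h] | /andP[odr h]] d; apply/orP; [left | right];
  by rewrite ?r2 ?odr (dvdn_trans h d).
Qed.

Lemma L2 r q : prime r -> 0 < q -> rcond r (q - 1) ->
  forall j, exists u, coprime u r /\ q ^ (r ^ j) - 1 = (q - 1) * r ^ j * u.
Proof.
move=> pr q0 hc; elim => [|j [u [cu E]]].
  by exists 1; rewrite expn0 expn1 muln1 muln1 coprime1n.
have M0 : rcond r (q ^ (r ^ j) - 1).
  by apply: rcond_dvd hc _; rewrite E -mulnA dvdn_mulr.
have [z Ez] := L1 pr M0.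
exists (u * (1 + r * z)); split.
  rewrite coprimeMl cu /= -coprime_modl addnC mulnC modnMDl modn_small ?coprime1n //.
  exact: prime_gt1.
have xq : 0 < q ^ r ^ j by rewrite expn_gt0 q0.
rewrite (subnKC xq) in Ez.
rewrite expnSr expnM Ez E; ring.
Qed.

Lemma sub1_identity A B : 0 < A -> 0 < B -> A * B - 1 = A * (B - 1) + (A - 1).
Proof. move=> A1 B1; nia. Qed.

Lemma pow_sub1_dvd x d k : 0 < x -> x ^ d - 1 %| x ^ (d * k) - 1.
Proof.
move=> x0; elim: k => [|k IH]; first by rewrite muln0 expn0 subnn dvdn0.
have A1 : 0 < x ^ (d * k) by rewrite expn_gt0 x0.
have B1 : 0 < x ^ d by rewrite expn_gt0 x0.
rewrite mulnS addnC expnD sub1_identity //.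
by rewrite dvdn_add ?dvdn_mull.
Qed.

Lemma pow_sub_dvd D x j l : 0 < x -> j <= l -> D %| x ^ l - 1 -> D %| x ^ j - 1 -> D %| x ^ (l - j) - 1.
Proof.
move=> x0 jl hl hj.
have A1 : 0 < x ^ (l - j) by rewrite expn_gt0 x0.
have B1 : 0 < x ^ j by rewrite expn_gt0 x0.
move: hl; rewrite -{1}(subnK jl) expnD sub1_identity //.
by rewrite dvdn_addr // dvdn_mull.
Qed.

Lemma arith_main r q c t : prime r -> 0 < q -> 0 < c -> 0 < t -> c %| q - 1 ->
  coprime ((q - 1) %/ c) r -> rcond r (q - 1) ->
  (c * r ^ t %| q ^ (r ^ t) - 1) /\ (forall e, 0 < e < r ^ t -> ~~ (c * r ^ t %| q ^ e - 1)).
Proof.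
move=> pr q0 c0 t0 cd cop hc.
set d := (q - 1) %/ c.
have Eq : q - 1 = d * c by rewrite divnK.
have [u [cu Eu]] := L2 pr q0 hc t.
have Pn : c * r ^ t %| q ^ (r ^ t) - 1.
  by rewrite Eu Eq; apply/dvdnP; exists (d * u); ring.
split => // e /andP[e0 en]; apply/negP => h.
have [a alt ha] := Bezoutl (r ^ t) e0.
set g := gcdn e (r ^ t) in ha.
have [k hk] := dvdnP ha.
have P1 : c * r ^ t %| q ^ (e * k) - 1 := dvdn_trans h (pow_sub1_dvd _ _ q0).
have P2 : c * r ^ t %| q ^ (r ^ t * a) - 1 := dvdn_trans Pn (pow_sub1_dvd _ _ q0).
have le : r ^ t * a <= e * k by rewrite mulnC [e * k]mulnC -hk leq_addl.
have P3 := pow_sub_dvd q0 le P1 P2.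
have eg : e * k - r ^ t * a = g by rewrite mulnC -hk mulnC addnK.
rewrite eg in P3.
have gd : g %| r ^ (t - 1).
  have : g %| r ^ t := dvdn_gcdr e (r ^ t).
  case/(dvdn_pfactor _ _ pr) => k' kt gE.
  rewrite gE dvdn_exp2l //.
  have : g <= e := dvdn_leq e0 (dvdn_gcdl e (r ^ t)).
  rewrite gE => ge.
  have kne : k' != t.
    by apply/eqP => kE; move: ge; rewrite kE leqNgt en.
  move: kt kne; clear; lia.
have [m hm] := dvdnP gd.
have P4 : c * r ^ t %| q ^ (r ^ (t - 1)) - 1.
  by rewrite hm (mulnC m); apply: dvdn_trans P3 (pow_sub1_dvd _ _ q0).
have [u' [cu' Eu']] := L2 pr q0 hc (t - 1).
rewrite Eu' Eq in P4.
have tE : t = (t - 1).+1 by rewrite subn1 prednK.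
have rt : r ^ t = r ^ (t - 1) * r by rewrite -expnSr -tE.
move: P4; rewrite rt.
have -> : c * (r ^ (t - 1) * r) = (c * r ^ (t - 1)) * r by ring.
have -> : d * c * r ^ (t - 1) * u' = (c * r ^ (t - 1)) * (d * u') by ring.
rewrite dvdn_pmul2l ?muln_gt0 ?c0 ?expn_gt0 ?prime_gt0 // Euclid_dvdM //.
have nd : ~~ (r %| d) by rewrite -prime_coprime // coprime_sym.
have nu : ~~ (r %| u') by rewrite -prime_coprime // coprime_sym.
by rewrite (negPf nd) (negPf nu).
Qed.

Lemma fermat_iter r x h : prime r -> x ^ (r ^ h) = x %[mod r].
Proof.
move=> pr; elim: h => [|h IH]; first by rewrite expn0 expn1.
by rewrite expnSr expnM -modnXm IH modnXm fermat_little.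
Qed.

Lemma cond_odd r q t h : prime r -> 0 < t -> 0 < q -> q ^ (r ^ h) = 1 %[mod r ^ t] -> r %| q - 1.
Proof.
move=> pr t0 q0 hq.
have hr : q ^ (r ^ h) = 1 %[mod r].
  by rewrite -(modn_dvdm _ (dvdn_exp t0 (dvdnn r))) hq modn_dvdm // dvdn_exp.
rewrite -eqn_mod_dvd //; apply/eqP; by rewrite -(fermat_iter q h pr).
Qed.

Lemma prim_fix (R : fieldType) n (z : R) m : (n.-primitive_root z)%R -> 0 < m -> (z ^+ m = z)%R -> n %| m - 1.
Proof.
move=> pz m0 e; rewrite (prim_order_dvd pz); apply/eqP.
have z0 : z != 0%R by rewrite (prim_root_eq0 pz) -lt0n (prim_order_gt0 pz).
by apply: (mulIf z0); rewrite mul1r -exprSr subn1 prednK.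
Qed.

Lemma pow_fix (F : finFieldType) (x : F) j : (x ^+ (#|F| ^ j) = x)%R.
Proof. by elim: j => [|j IH]; rewrite ?expn0 ?expr1 // expnSr exprM IH expf_card. Qed.

Lemma sum_nseq (F : fieldType) (x : F) d : (\sum_(y <- nseq d x) y = x *+ d)%R.
Proof. by elim: d => [|d IH]; rewrite ?big_nil ?mulr0n // big_cons IH mulrS. Qed.

Theorem mainTheorem14 (p r a c t : nat) (F1 F2 : finFieldType) :
  prime p -> prime r -> r != p ->
  0 < a -> 0 < c -> 2 <= t ->
  primitive_divisor p a c ->
  coprime ((p ^ a - 1) %/ c) r ->
  (r = 2 /\ p ^ a = 1 %[mod 4]) \/
  (odd r /\ exists h, h <= t - 1 /\ mult_order_mod (r ^ t) (p ^ a) (r ^ h)) ->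
  #|F1| = p ^ (a * r ^ t) -> #|F2| = p ^ a ->
  exists s, is_waring_number F2 ((p ^ a - 1) %/ c) s /\
            is_waring_number F1 ((p ^ (a * r ^ t) - 1) %/ (c * r ^ t)) (r ^ t * s).
Proof.
move=> pp pr _ a0 c0 t2 [cd cprim] cop hcase h1 h2.
rewrite expnM in h1 *.
have q0 : 0 < p ^ a by rewrite expn_gt0 prime_gt0.
have q1 : 1 < p ^ a by rewrite -[1](expn0 p) ltn_exp2l // prime_gt1.
have t0 : 0 < t by apply: leq_trans t2.
have n0 : 0 < r ^ t by rewrite expn_gt0 prime_gt0.
have hc : rcond r (p ^ a - 1).
  case: hcase => [[r2 hq] | [odr [h [_ [_ [hq _]]]]]]; apply/orP; [left | right].
    by rewrite r2 eqxx /= -eqn_mod_dvd //; apply/eqP.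
  by rewrite odr (cond_odd pr t0 q0 hq).
have [Nd N2] := arith_main pr q0 c0 t0 cd cop hc.
set q := p ^ a in q0 q1 h1 h2 cd cop hc Nd N2 *.
set n := r ^ t in n0 h1 Nd N2 *.
have ch2 : p \in [pchar F2]%R := card_finPcharP h2 pp.
have ch1 : p \in [pchar F1]%R by apply: (card_finPcharP (n := a * n)) => //; rewrite h1 /q -expnM.
have hfix : forall x : F2, (x ^+ #|F1| = x)%R by move=> x; rewrite h1 -h2 pow_fix.
have [phi] := embed_exists ch2 ch1 hfix.
set k2 := (q - 1) %/ c.
have k2c : k2 * c = q - 1 by rewrite divnK.
have k20 : 0 < k2 by rewrite divn_gt0 // dvdn_leq // subn_gt0.
set k1 := (q ^ n - 1) %/ (c * n).
have k1c : k1 * (c * n) = q ^ n - 1 by rewrite divnK.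
have Q1 : 1 < q ^ n by rewrite -[1](expn0 q) ltn_exp2l.
have k10 : 0 < k1 by rewrite divn_gt0 ?muln_gt0 ?c0 // dvdn_leq // subn_gt0.
have c2 : #|F2|.-1 = k2 * c by rewrite k2c h2 subn1.
have c1 : #|F1|.-1 = k1 * (c * n) by rewrite k1c h1 subn1.
have [al alP alE] := ff_prim F2.
have [w1 w1P w1E] := ff_prim F1.
rewrite c2 in alP alE; rewrite c1 in w1P w1E.
have gaP : (c.-primitive_root (al ^+ k2))%R.
  have := exp_prim_root alP k2.
  by rewrite (gcdn_idPl (dvdn_mulr c (dvdnn k2))) mulKn.
have beP : ((c * n).-primitive_root (w1 ^+ k1))%R.
  have := exp_prim_root w1P k1.
  by rewrite (gcdn_idPl (dvdn_mulr (c * n) (dvdnn k1))) mulKn.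
set ga := (al ^+ k2)%R in gaP.
set be := (w1 ^+ k1)%R in beP.
have gmP : (c.-primitive_root (be ^+ n))%R.
  have := exp_prim_root beP n.
  by rewrite (gcdn_idPl (dvdn_mull c (dvdnn n))) mulnK.
have phigaP : (c.-primitive_root (phi ga))%R by rewrite fmorph_primitive_root.
have rootc : forall v : F1, (v ^+ c = 1)%R -> exists2 w, w \in @kp F2 k2 & v = phi w.
  move=> v hv; have [i ->] := prim_rootP phigaP hv.
  exists ((al ^+ i) ^+ k2)%R; first by apply/kpP; eexists.
  by rewrite -rmorphXn /ga exprAC.
have hex2 : forall y : F2, SumA (@kp F2 k2) (a * p) y.
  move=> y.
  have hth : forall e, 0 < e < a -> (ga ^+ (p ^ (1 * e)) != ga)%R.
    move=> e /andP[e0 ea]; apply/eqP => E.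
    have pe : 0 < p ^ (1 * e) by rewrite expn_gt0 prime_gt0.
    have := prim_fix gaP pe E; rewrite mul1n => h.
    by move: (cprim e); rewrite e0 ea h => /(_ isT).
  have fixp : forall d : 'F_p, (fpiD ch2 d ^+ (p ^ 1) = fpiD ch2 d)%R.
    move=> d; have E : (d ^+ p = d)%R by have := expf_card d; rewrite card_Fp.
    by rewrite -rmorphXn expn1 E.
  have hcard : #|'F_p| ^ a = #|F2| by rewrite card_Fp // h2.
  have [f ->] := brepr_onto ch2 (fmorph_inj (fpiD ch2)) fixp hth hcard y.
  rewrite /brepr; apply: SumA_sum => i.
  exists (nseq (f i : nat) (ga ^+ i)%R); split.
  - rewrite size_nseq ltnW //; have := ltn_ord (f i); by rewrite [X in _ < X -> _]Fp_cast.
  - by apply/allP => z /nseqP[-> _]; apply/kpP; exists (al ^+ i)%R; rewrite /ga exprAC.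
  - by rewrite sum_nseq -mulr_natl.
have [g2 [hg2 g2min]] := @min_exists nat (fun s => forall y : F2, SumA (@kp F2 k2) s y) id
  (ex_intro _ (a * p) hex2).
have fix1 : forall d : F2, (phi d ^+ (p ^ a) = phi d)%R.
  move=> d; rewrite -rmorphXn (_ : p ^ a = #|F2|); first by rewrite expf_card.
  by rewrite h2.
have hth1 : forall e, 0 < e < n -> (be ^+ (p ^ (a * e)) != be)%R.
  move=> e /andP[e0 en]; apply/eqP => E.
  have pe : 0 < p ^ (a * e) by rewrite expn_gt0 prime_gt0.
  have := prim_fix beP pe E; rewrite expnM -/q => h.
  by move: (N2 e); rewrite e0 en h => /(_ isT).
have hcard1 : #|F2| ^ n = #|F1| by rewrite h2 h1.
have onto1 := brepr_onto ch1 (fmorph_inj phi) fix1 hth1 hcard1.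
have inj1 := brepr_inj ch1 (fmorph_inj phi) fix1 hth1.
have hbasis : forall x : F1, exists f : 'I_n -> F2, x = (\sum_(i < n) phi (f i) * be ^+ i)%R.
  by move=> x; have [f ->] := onto1 x; exists (fun i => f i).
have huniq : forall f g : 'I_n -> F2, (\sum_(i < n) phi (f i) * be ^+ i)%R =
    (\sum_(i < n) phi (g i) * be ^+ i)%R -> forall i, f i = g i.
  move=> f g E i.
  have E' : brepr phi be (finfun f) = brepr phi be (finfun g).
    by rewrite /brepr; under eq_bigr do rewrite ffunE; under [RHS]eq_bigr do rewrite ffunE.
  by have := inj1 _ _ E'; move/ffunP/(_ i); rewrite !ffunE.
have hcomp : forall (i : 'I_n) w, w \in @kp F2 k2 -> (phi w * be ^+ i)%R \in @kp F1 k1.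
  move=> i w /kpP[u ->]; case: (eqVneq u 0%R) => [->|nz].
    rewrite -(prednK k20) exprS mul0r rmorph0 mul0r; apply/kpP; exists 0%R.
    by rewrite -(prednK k10) exprS mul0r.
  have hv : (phi (u ^+ k2) ^+ c = 1)%R.
    by rewrite -rmorphXn -exprM -c2 ff_nz_pow // rmorph1.
  have [j ->] := prim_rootP gmP hv.
  apply/kpP; exists (w1 ^+ (n * j + i))%R.
  by rewrite exprAC -/be exprD exprM.
have hdec : forall z, z \in @kp F1 k1 -> exists (i : 'I_n) (w : F2), w \in @kp F2 k2 /\ z = (phi w * be ^+ i)%R.
  move=> z /kpP[u ->]; case: (eqVneq u 0%R) => [->|nz].
    exists (Ordinal n0), 0%R; split.
      by apply/kpP; exists 0%R; rewrite -(prednK k20) exprS mul0r.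
    by rewrite rmorph0 mul0r -(prednK k10) exprS mul0r.
  have [j _ ->] := w1E _ nz.
  rewrite exprAC -/be (divn_eq j n) exprD (mulnC (j %/ n)) exprM.
  have hv : (((be ^+ n) ^+ (j %/ n)) ^+ c = 1)%R.
    by rewrite -exprM mulnC exprM (prim_expr_order gmP) expr1n.
  have [w hw ->] := rootc _ hv.
  by exists (Ordinal (ltn_pmod j n0)), w.
exists g2; split.
  split; first exact: (waringE _ g2 k20).2 hg2.
  by move=> s' /(waringE _ s' k20).1 hs'; exact: g2min.
split; first exact: (waringE _ _ k10).2 (upper hbasis hcomp hg2).
move=> s' /(waringE _ s' k10).1 hs'.
case: g2 hg2 g2min => [|s2] hg2 g2min; first by rewrite muln0.
have [y0 ny0] : exists y0, ~ SumA (@kp F2 k2) s2 y0.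
  apply: not_all_ex_not => hall; have := g2min s2 hall; by rewrite ltnn.
exact: lower huniq hdec _ _ _ ny0 hs'.
Qed.
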